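(* Let $n\ge 1$ and let $\mathsf{Q}:\mathbb{R}\to SO(n)$ be a map whose entries are twice continuously differentiable real functions. Define $\mathsf{P}(\tau):=\mathsf{Q}(\tau)^{\mathsf T}\,\mathsf{Q}''(\tau)$. Then for every $\tau\in\mathbb{R}$, every negative eigenvalue of $\operatorname{sym}(\mathsf{P}(\tau))$ (if any exists) has even algebraic multiplicity.
   Context: $\mathsf{Q}''$ denotes the entrywise second derivative of $\mathsf{Q}$; for a square real matrix $\mathsf{A}$, $\operatorname{sym}(\mathsf{A}):=\tfrac12(\mathsf{A}+\mathsf{A}^{\mathsf T})$. *)

(* Defs.v *)
From HB Require Import structures.
From mathcomp Require Import all_boot all_order all_algebra.
From mathcomp Require Import all_classical all_reals all_analysis.
Set Implicit Arguments. Unset Strict Implicit. Unset Printing Implicit Defensive.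
Import Order.TTheory GRing.Theory Num.Theory.
Import numFieldNormedType.Exports.
Local Open Scope ring_scope.

Definition in_SO (R : realType) (n : nat) (M : 'M[R]_n) : Prop :=
  M *m M^T = 1%:M /\ \det M = 1.

Definition C2 (R : realType) (f : R -> R) : Prop :=
  (forall x, derivable f x 1) /\
  (forall x, derivable (derive1 f) x 1) /\
  continuous (derive1 (derive1 f)).

Definition mx_second_deriv (R : realType) (n : nat) (Q : R -> 'M[R]_n) (tau : R)
  : 'M[R]_n :=
  \matrix_(i, j) derive1 (derive1 (fun t => Q t i j)) tau.

Definition msym (R : realType) (n : nat) (A : 'M[R]_n) : 'M[R]_n :=
  2^-1 *: (A + A^T).

Definition alg_mult (R : realType) (n : nat) (A : 'M[R]_n) (a : R) : nat :=
  mup a (char_poly A).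

(* Main.v *)
Require Import Defs.
From HB Require Import structures.
From mathcomp Require Import all_boot all_order all_algebra.
From mathcomp Require Import all_classical all_reals all_analysis.
Import Order.TTheory GRing.Theory Num.Theory.
Import numFieldNormedType.Exports.
Local Open Scope ring_scope.
From mathcomp Require Import ring lra.
Lemma irr_div_or_coprime (F : fieldType) (s q : {poly F}) :
  irreducible_poly s -> (s %| q) || coprimep s q.
Proof.
move=> irr; have [g1|g1] := eqVneq (size (gcdp s q)) 1%N.
  by rewrite coprimep_def g1 orbT.
have H := irr _ g1 (dvdp_gcdl s q).
by rewrite -(eqp_dvdl _ H) dvdp_gcdr.
Qed.

Lemma irr_ncop (F : fieldType) (s t : {poly F}) :
  irreducible_poly s -> coprimep s (s * t) = false.
Proof.
move=> irr; rewrite coprimepMr coprimep_def gcdpp.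
by case: irr => /gtn_eqF -> _.
Qed.

Lemma even_mult (F : fieldType) (s : {poly F}) : irreducible_poly s ->
  forall m q f, q ^+ 2 = s ^+ m * f -> coprimep s f -> ~~ odd m.
Proof.
move=> irr m; elim/ltn_ind: m => m IH q f E cop.
have s0 : s != 0 := irredp_neq0 irr.
case: m IH E => [//|m] IH E.
have sq: s %| q.
  case/orP: (@irr_div_or_coprime _ s q irr) => // c.
  have := coprimep_expr 2 c.
  by rewrite E exprS -mulrA irr_ncop.
case/dvdpP: sq => q1 Eq; rewrite {}Eq in E.
case: m IH E => [|m] IH E.
  have Ef : f = q1 ^+ 2 * s.
    apply: (mulfI s0); rewrite expr1 in E; rewrite -E.
    ring.
  by move: cop; rewrite Ef mulrC irr_ncop.
have E' : q1 ^+ 2 = s ^+ m * f.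
  apply: (mulfI (expf_neq0 2 s0)).
  rewrite mulrC -exprMn E mulrA -exprD.
  by rewrite addnC addn2.
by rewrite -addn2 oddD addbF; apply: (IH m _ q1 f E' cop); rewrite ltnS leqW.
Qed.

Lemma char_poly_sq_comp (R : comNzRingType) n (A : 'M[R]_n) :
  A^T = - A -> char_poly (A *m A) \Po 'X^2 = char_poly A ^+ 2.
Proof.
move=> skew.
rewrite /char_poly -det_map_mx.
set At := map_mx polyC A.
have E : map_mx (comp_poly 'X^2) (char_poly_mx (A *m A)) =
         ('X%:M - At) *m ('X%:M + At).
  rewrite mulmxDr !mulmxBl -scalar_mxM -expr2 scalar_mxC addrA subrK.
  apply/matrixP => i j; rewrite !mxE.
  rewrite comp_polyB rmorphMn /= comp_polyX; congr (_ - _).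
  rewrite rmorph_sum /=.
  rewrite linear_sum; apply eq_bigr => k _.
  rewrite /At !mxE.
  by rewrite /= comp_polyC polyCM.
rewrite E det_mulmx expr2; congr (_ * _).
rewrite -det_tr linearD /= tr_scalar_mx /At map_trmx skew.
by rewrite map_mxN.
Qed.

Lemma skew_sq_even (R : realFieldType) n (A : 'M[R]_n) (a : R) :
  A^T = - A -> a < 0 -> ~~ odd (mup a (char_poly (A *m A))).
Proof.
move=> skew a0.
set p := char_poly (A *m A).
have key : p \Po 'X^2 = char_poly A ^+ 2 by apply: char_poly_sq_comp.
have p0 : p != 0 by apply: monic_neq0; apply: char_poly_monic.
set m := mup a p.
have : ('X - a%:P) ^+ m %| p by rewrite -mup_geq.
case/dvdpP => r Ep.
have nr : ~~ root r a.
  apply/negP => /factor_theorem [r' Er].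
  have := mup_ltn a m.+1 p0; rewrite ltnSn => /esym/negP; apply.
  by rewrite Ep Er -mulrA -exprS dvdp_mull.
set s : {poly R} := 'X^2 - a%:P.
have irr : irreducible_poly s.
  apply: cubic_irreducible; first by rewrite size_XnsubC.
  move=> x; rewrite /root /s !hornerE; apply/negP => /eqP h.
  have : 0 <= x ^+ 2 by apply: sqr_ge0.
  lra.
have E2 : char_poly A ^+ 2 = s ^+ m * (r \Po 'X^2).
  by rewrite -key Ep rmorphM rmorphXn /= comp_polyB comp_polyX comp_polyC mulrC.
apply: (@even_mult _ _ irr _ _ _ E2).
have : root (r - (r.[a])%:P) a by rewrite /root !hornerE subrr.
case/factor_theorem => t Et.
have -> : r = t * ('X - a%:P) + (r.[a])%:P by rewrite -Et subrK.
rewrite rmorphD rmorphM /= comp_polyB comp_polyX !comp_polyC -/s.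
rewrite coprimep_addl_mul.
have c0 : r.[a] != 0 by [].
apply/coprimepP => d _ hd.
have d0 : d != 0 by apply: contraTneq hd => ->; rewrite dvd0p polyC_eq0.
rewrite -size_poly_eq1 eqn_leq size_poly_gt0 d0 andbT.
have cp0 : (r.[a])%:P != 0 by rewrite polyC_eq0.
by have := dvdp_leq cp0 hd; rewrite size_polyC c0.
Qed.

Lemma deriv_sum_prod (R : realType) n (f g : 'I_n -> R -> R) (df dg : 'I_n -> R)
  (x c : R) :
  (forall t, \sum_(k < n) f k t * g k t = c) ->
  (forall k, is_derive x 1 (f k) (df k)) ->
  (forall k, is_derive x 1 (g k) (dg k)) ->
  \sum_(k < n) (f k x * dg k + g k x * df k) = 0.
Proof.
move=> Hc Hf Hg.
have H : is_derive x 1 (\sum_(k < n) (f k * g k))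
                       (\sum_(k < n) (f k x *: dg k + g k x *: df k)).
  by apply: is_derive_sum => k; apply: is_deriveM.
have E : \sum_(k < n) (f k * g k) = cst c.
  by rewrite fct_sumE; apply/funext => t; rewrite -(Hc t).
rewrite E in H.
have := @derive_val _ _ _ _ _ _ _ H; rewrite derive_cst => <-.
by [].
Qed.

Lemma deriv_sum_prod2 (R : realType) n (f1 g1 f2 g2 : 'I_n -> R -> R)
  (df1 dg1 df2 dg2 : 'I_n -> R) (x c : R) :
  (forall t, \sum_(k < n) (f1 k t * g1 k t + f2 k t * g2 k t) = c) ->
  (forall k, is_derive x 1 (f1 k) (df1 k)) ->
  (forall k, is_derive x 1 (g1 k) (dg1 k)) ->
  (forall k, is_derive x 1 (f2 k) (df2 k)) ->
  (forall k, is_derive x 1 (g2 k) (dg2 k)) ->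
  \sum_(k < n) (f1 k x * dg1 k + g1 k x * df1 k
                + (f2 k x * dg2 k + g2 k x * df2 k)) = 0.
Proof.
move=> Hc Hf1 Hg1 Hf2 Hg2.
have H : is_derive x 1 (\sum_(k < n) (f1 k * g1 k + f2 k * g2 k))
   (\sum_(k < n) (f1 k x *: dg1 k + g1 k x *: df1 k
                + (f2 k x *: dg2 k + g2 k x *: df2 k))).
  by apply: is_derive_sum => k; apply: is_deriveD; apply: is_deriveM.
have E : \sum_(k < n) (f1 k * g1 k + f2 k * g2 k) = cst c.
  by rewrite fct_sumE; apply/funext => t; rewrite -(Hc t).
rewrite E in H.
have := @derive_val _ _ _ _ _ _ _ H; rewrite derive_cst => <-.
by [].
Qed.

Theorem lemma4 (R : realType) (n : nat) (Q : R -> 'M[R]_n) :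
  (0 < n)%N ->
  (forall t, in_SO (Q t)) ->
  (forall i j, C2 (fun t => Q t i j)) ->
  forall tau : R,
    let P := (Q tau)^T *m mx_second_deriv Q tau in
    forall a : R, a < 0 -> eigenvalue (msym P) a ->
      ~~ odd (alg_mult (msym P) a).
Proof.
move=> _ HSO HC2 tau P a a0 _.
pose d i j := derive1 (fun t => Q t i j).
have isd : forall (i j : 'I_n) (t : R), is_derive t 1 (fun t => Q t i j) (d i j t).
  move=> i j t; rewrite /d derive1E; apply: derivableP.
  by case: (HC2 i j) => h _; apply: h.
have isdd : forall i j : 'I_n, is_derive tau 1 (d i j) (derive1 (d i j) tau).
  move=> i j; rewrite derive1E; apply: derivableP.
  by case: (HC2 i j) => _ [h _]; apply: h.
have orth : forall (t : R) (i j : 'I_n), \sum_(k < n) Q t k i * Q t k j = (i == j)%:R.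
  move=> t i j; case: (HSO t) => /mulmx1C H _.
  have := congr1 (fun M : 'M[R]_n => M i j) H; rewrite !mxE => <-.
  by apply: eq_bigr => k _; rewrite mxE.
have F1 : forall (t : R) (i j : 'I_n),
    \sum_(k < n) (Q t k i * d k j t + Q t k j * d k i t) = 0.
  move=> t i j.
  have := @deriv_sum_prod R n (fun k t => Q t k i) (fun k t => Q t k j)
           (fun k => d k i t) (fun k => d k j t) t _ (fun s => orth s i j)
           (fun k => isd k i t) (fun k => isd k j t).
  by [].
have F2 : forall i j : 'I_n,
    \sum_(k < n) (Q tau k i * derive1 (d k j) tau + d k j tau * d k i tau
       + (Q tau k j * derive1 (d k i) tau + d k i tau * d k j tau)) = 0.
  move=> i j.
  have := @deriv_sum_prod2 R n (fun k t => Q t k i) (fun k => d k j)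
           (fun k t => Q t k j) (fun k => d k i)
           (fun k => d k i tau) (fun k => derive1 (d k j) tau)
           (fun k => d k j tau) (fun k => derive1 (d k i) tau) tau 0
           (fun s => F1 s i j) (fun k => isd k i tau) (fun k => isdd k j)
           (fun k => isd k j tau) (fun k => isdd k i).
  by [].
pose D := \matrix_(i, j) d i j tau.
pose A := (Q tau)^T *m D.
have skew : A^T = - A.
  apply/matrixP => i j; rewrite !mxE.
  apply/eqP; rewrite -subr_eq0 opprK -big_split /=; apply/eqP.
  rewrite -[RHS](F1 tau j i); apply: eq_bigr => k _; by rewrite !mxE.
have Esym : msym P = A *m A.
  have AA : A *m A = - (D^T *m D).
    rewrite -{1}[A]opprK -skew mulNmx /A trmx_mul trmxK mulmxA.
    rewrite -(mulmxA D^T).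
    case: (HSO tau) => -> _.
    by rewrite mulmx1.
  rewrite AA /msym /P; apply/matrixP => i j; rewrite !mxE.
  have X1 : forall i j : 'I_n, \sum_(k < n) (Q tau)^T i k * mx_second_deriv Q tau k j
      = \sum_(k < n) Q tau k i * derive1 (d k j) tau.
    by move=> i' j'; apply: eq_bigr => k _; rewrite !mxE.
  have Z : \sum_(k < n) D^T i k * D k j = \sum_(k < n) d k i tau * d k j tau.
    by apply: eq_bigr => k _; rewrite !mxE.
  have H := F2 i j; rewrite !big_split /= in H.
  have W : \sum_(k < n) d k j tau * d k i tau = \sum_(k < n) d k i tau * d k j tau.
    by apply: eq_bigr => k _; rewrite mulrC.
  rewrite !X1 Z; rewrite W in H; lra.
rewrite /alg_mult Esym.
exact: skew_sq_even.
Qed.
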